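(* Let $1<m<n$ and let $G=K_{m,n}$ be the uniform coloured complete bipartite graph with parts $V_1=\{1,\dots,m\}$ and $V_2=\{m+1,\dots,m+n\}$, with associated linear space $\mathcal L$. Let $E_1^c$ (resp. $E_2^c$) be the set of pairs of distinct vertices in $V_1$ (resp. $V_2$), and $E$ the set of edges $\{i,j\}$ with $i\in V_1$, $j\in V_2$. Then $r=3$, $s=5$, and the vector space of linear forms in $I(\mathcal L^{-1})$ is spanned by $x_{11}-x_{ii}$ ($i\in V_1$); $x_{m+1,m+1}-x_{ii}$ ($i\in V_2$); $x_{12}-x_{ij}$ ($\{i,j\}\in E_1^c$); $x_{m+1,m+2}-x_{ij}$ ($\{i,j\}\in E_2^c$); $x_{1,m+1}-x_{ij}$ ($\{i,j\}\in E$); $m\,x_{12}-n\,x_{m+n-1,m+n}$; and $m\,x_{11}-(n-m)\,x_{m+n-1,m+n}-m\,x_{m+n,m+n}$.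
   Context: For a simple graph $G$ on $V=\{1,\dots,N\}$, its uniform coloured version has one vertex colour and one edge colour, and its associated linear space is $\mathcal L=\{\lambda_1I_N+\lambda_2A_2:\lambda_1,\lambda_2\in\mathbb C\}\subseteq\mathbb S^N$, where $A_2$ is the 0/1 adjacency matrix of $G$. The reciprocal variety $\mathcal L^{-1}$ is the Zariski closure of $\{M^{-1}:M\in\mathcal L\text{ invertible}\}$, with vanishing ideal $I(\mathcal L^{-1})\subseteq\mathbb C[x_{ij}:1\le i\le j\le N]$, using $x_{ji}=x_{ij}$. Here $r$ is the number of distinct eigenvalues of $A_2$ and $s$ is the number of orbits of the automorphism group of $G$ acting on unordered pairs $\{i,j\}$ of (not necessarily distinct) vertices via $\{i,j\}\mapsto\{\sigma(i),\sigma(j)\}$. *)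

(* Defs.v *)
From HB Require Import structures.
From mathcomp Require Import all_boot all_order all_algebra.
From mathcomp Require Import fingroup perm.
Set Implicit Arguments. Unset Strict Implicit. Unset Printing Implicit Defensive.
Import Order.TTheory GRing.Theory Num.Theory.
Local Open Scope ring_scope.

(* Vertices of a graph on N vertices are 'I_N (vertex k+1 of the paper is k). *)

Definition Kmn_rel (m n : nat) : rel 'I_(m + n) :=
  fun i j => (i < m)%N != (j < m)%N.

Definition adjmx (C : nzRingType) (N : nat) (e : rel 'I_N) : 'M[C]_N :=
  \matrix_(i, j) (if e i j then 1 else 0).

Definition in_Lspace (C : nzRingType) (N : nat) (A : 'M[C]_N) (M : 'M[C]_N) : Prop :=
  exists l1 l2 : C, M = l1%:M + l2 *: A.

(** Points M^{-1}, M in L invertible (the set whose Zariski closure is L^{-1}). *)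
Definition recip_pt (C : fieldType) (N : nat) (A : 'M[C]_N) (X : 'M[C]_N) : Prop :=
  exists M, [/\ in_Lspace A M, M \in unitmx & X = invmx M].

(** Variables x_ij, i <= j, of C[x_ij : 1 <= i <= j <= N]. *)
Definition var (N : nat) := {p : 'I_N * 'I_N | (p.1 <= p.2)%N}.

(** A linear form sum_{i<=j} c_ij x_ij is given by its coefficient function. *)
Definition linform (C : fieldType) (N : nat) := {ffun var N -> C^o}.

Definition lin_eval (C : fieldType) (N : nat) (c : linform C N) (X : 'M[C]_N) : C :=
  \sum_(v : var N) c v * X (val v).1 (val v).2.

(** The linear form c lies in I(L^{-1}): it vanishes on all M^{-1}, M in L
    invertible (equivalently on their Zariski closure L^{-1}). *)
Definition linform_in_ideal (C : fieldType) (N : nat) (A : 'M[C]_N) (c : linform C N) : Prop :=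
  forall X, recip_pt A X -> lin_eval c X = 0.

(** The variable x_ij = x_ji as a linear form (indices as nats, 0-based). *)
Definition xv (C : fieldType) (N : nat) (i j : nat) : linform C N :=
  [ffun v : var N => if (((val v).1 : nat) == minn i j) && (((val v).2 : nat) == maxn i j)
                     then 1 else 0].

Definition num_eigenvalues_is (C : fieldType) (N : nat) (A : 'M[C]_N) (r : nat) : Prop :=
  exists s : seq C, [/\ uniq s, size s = r & forall a, eigenvalue A a <-> a \in s].

Definition is_aut (N : nat) (e : rel 'I_N) (g : {perm 'I_N}) : bool :=
  [forall i, forall j, e (g i) (g j) == e i j].

(** Unordered pairs {i,j} (i = j allowed) represented by ordered pairs; p ~ q iff
    some automorphism maps {p.1,p.2} to {q.1,q.2}. *)
Definition pair_rel (N : nat) (e : rel 'I_N) (p q : 'I_N * 'I_N) : bool :=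
  [exists g : {perm 'I_N}, is_aut e g &&
     (((g p.1, g p.2) == q) || ((g p.2, g p.1) == q))].

Definition num_pair_orbits (N : nat) (e : rel 'I_N) : nat :=
  #|[set [set q | pair_rel e p q] | p : 'I_N * 'I_N]|.

Definition Kmn_forms (C : fieldType) (m n : nat) : seq (linform C (m + n)) :=
  let x := @xv C (m + n) in
  [seq x 0 0 - x i i | i <- iota 0 m] ++
  [seq x m m - x i i | i <- iota m n] ++
  [seq x 0 1 - x p.1 p.2 | p <- [seq (i, j) | i <- iota 0 m, j <- iota 0 m] & (p.1 < p.2)%N] ++
  [seq x m m.+1 - x p.1 p.2 | p <- [seq (i, j) | i <- iota m n, j <- iota m n] & (p.1 < p.2)%N] ++
  [seq x 0 m - x i j | i <- iota 0 m, j <- iota m n] ++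
  [:: m%:R *: x 0 1 - n%:R *: x (m + n - 2)%N (m + n - 1)%N;
      m%:R *: x 0 0 - (n - m)%:R *: x (m + n - 2)%N (m + n - 1)%N
        - m%:R *: x (m + n - 1)%N (m + n - 1)%N].

Arguments Kmn_rel : clear implicits.
Arguments adjmx : clear implicits.
Arguments Kmn_forms : clear implicits.
Arguments adjmx C {N} e.

(* Main.v *)
Require Import Defs.
From HB Require Import structures.
From mathcomp Require Import all_boot all_order all_algebra.
From mathcomp Require Import fingroup perm.
From mathcomp Require Import ring zify.
Import Order.TTheory GRing.Theory Num.Theory.
Set Implicit Arguments. Unset Strict Implicit. Unset Printing Implicit Defensive.
Section O.
Variables m n : nat.
Hypothesis hm : (1 < m)%N.
Hypothesis hmn : (m < n)%N.
Local Notation e := (Kmn_rel m n).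

Lemma cardP (b : bool) : #|[set j : 'I_(m+n) | (j < m)%N == b]| = if b then m else n.
Proof.
rewrite -sum1_card big_mkcond big_split_ord /=.
rewrite (eq_bigr (fun _ => if b then 1 else 0)%N); last by move=> i _; rewrite inE /= ltn_ord; case: b.
rewrite [X in (_ + X)%N](eq_bigr (fun _ => if b then 0 else 1)%N); last first.
  by move=> i _; rewrite inE /= ltnNge leq_addr; case: b.
by rewrite !sum_nat_const !card_ord; case: b; rewrite ?muln1 ?muln0 ?addn0.
Qed.

Lemma deg_val i : #|[set j | e i j]| = if (i < m)%N then n else m.
Proof.
have -> : [set j | e i j] = [set j : 'I_(m+n) | (j < m)%N == ~~ (i < m)%N].
  by apply/setP => j; rewrite !inE /Kmn_rel; case: (i < m)%N; case: (j < m)%N.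
by rewrite cardP; case: (i < m)%N.
Qed.

Lemma aut_part (g : {perm 'I_(m+n)}) : is_aut e g -> forall i, (g i < m)%N = (i < m)%N.
Proof.
move=> /forallP ha i.
have : #|[set j | e (g i) j]| = #|[set j | e i j]|.
  rewrite -(card_preimset _ (@perm_inj _ g)).
  by apply: eq_card => j; rewrite !inE; move/forallP: (ha i) => /(_ j) /eqP.
rewrite !deg_val.
case: (g i < m)%N; case: (i < m)%N => // h; lia.
Qed.

Lemma part_aut (g : {perm 'I_(m+n)}) : (forall i, (g i < m)%N = (i < m)%N) -> is_aut e g.
Proof. by move=> h; apply/forallP => i; apply/forallP => j; rewrite /Kmn_rel !h. Qed.

Definition tyn (p : 'I_(m+n) * 'I_(m+n)) : nat :=
  if p.1 == p.2 then (if (p.1 < m)%N then 0 else 1)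
  else if (p.1 < m)%N == (p.2 < m)%N then (if (p.1 < m)%N then 2 else 3) else 4.

Lemma tyn_lt p : (tyn p < 5)%N.
Proof. by rewrite /tyn; case: (p.1 == p.2); case: (p.1 < m)%N; case: (p.2 < m)%N. Qed.

Lemma tyn_swap a b : tyn (b, a) = tyn (a, b).
Proof.
rewrite /tyn /= [b == a]eq_sym [((b < m)%N == _)]eq_sym.
case: (a =P b) => [->|] //.
by case: (a < m)%N; case: (b < m)%N.
Qed.

Lemma tyn_aut (g : {perm 'I_(m+n)}) a b : is_aut e g -> tyn (g a, g b) = tyn (a, b).
Proof. by move=> ha; rewrite /tyn /= (inj_eq perm_inj) !(aut_part ha). Qed.

Lemma exists_aut (a b c d : 'I_(m+n)) : (a < m)%N = (c < m)%N -> (b < m)%N = (d < m)%N -> (a == b) = (c == d) ->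
  exists g, [/\ is_aut e g, g a = c & g b = d].
Proof.
move=> hac hbd hab.
set s1 := tperm a c.
have hs1 : forall i, (s1 i < m)%N = (i < m)%N.
  by move=> i; rewrite /s1; case: tpermP => [->|->|].
set b' := s1 b.
set s2 := tperm b' d.
have hs2 : forall i, (s2 i < m)%N = (i < m)%N.
  by move=> i; rewrite /s2; case: tpermP => [->|->|] //; rewrite /b' hs1.
exists (s1 * s2)%g; split.
- by apply: part_aut => i; rewrite permM hs2 hs1.
- rewrite permM /s1 tpermL.
  case: (a =P b) hab => [eab /esym /eqP ecd|nab].
    by rewrite /s2 /b' -eab /s1 tpermL -ecd tpermR.
  move=> /esym /negbT ncd.
  rewrite /s2 tpermD //; last by rewrite eq_sym.
  rewrite /b' /s1.
  apply/eqP => h; apply: nab.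
  by apply: (@perm_inj _ (tperm a c)); rewrite tpermL h.
- by rewrite permM /s2 tpermL.
Qed.

Lemma pair_relE p q : pair_rel e p q = (tyn p == tyn q).
Proof.
case: p => a b; case: q => c d.
apply/idP/idP.
  case/existsP => g /andP [ha /orP []] /eqP <-.
    by rewrite tyn_aut.
  by rewrite tyn_aut // tyn_swap.
rewrite /tyn /=.
move=> h.
have [[h1 h2 h3]|[h1 h2 h3]] : [/\ (a < m)%N = (c < m)%N, (b < m)%N = (d < m)%N & (a == b) = (c == d)]
   \/ [/\ (a < m)%N = (d < m)%N, (b < m)%N = (c < m)%N & (a == b) = (d == c)].
  move: h.
  rewrite [d == c]eq_sym.
  case: (a =P b) => [<-|/eqP/negbTE hab]; case: (c =P d) => [<-|/eqP/negbTE hcd];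
  rewrite ?eqxx ?hab ?hcd;
  case: (a < m)%N; case: (b < m)%N; case: (c < m)%N; case: (d < m)%N => //= _;
  by [left | right].
- have [g [ga gb gc]] := exists_aut h1 h2 h3.
  by apply/existsP; exists g; rewrite ga gb gc eqxx.
- have [g [ga gb gc]] := exists_aut h1 h2 h3.
  by apply/existsP; exists g; rewrite ga gb gc eqxx orbT.
Qed.

Lemma lt_0' : (0 < m + n)%N. Proof. lia. Qed.
Lemma lt_1' : (1 < m + n)%N. Proof. lia. Qed.
Lemma lt_m' : (m < m + n)%N. Proof. lia. Qed.
Lemma lt_m1' : (m.+1 < m + n)%N. Proof. lia. Qed.

Definition wit (t : nat) : 'I_(m+n) * 'I_(m+n) :=
  if t == 0 then (Ordinal lt_0', Ordinal lt_0') else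
  if t == 1 then (Ordinal lt_m', Ordinal lt_m') else
  if t == 2 then (Ordinal lt_0', Ordinal lt_1') else
  if t == 3 then (Ordinal lt_m', Ordinal lt_m1') else (Ordinal lt_0', Ordinal lt_m').

Lemma tyn_wit t : (t < 5)%N -> tyn (wit t) = t.
Proof.
have h0 : (0 < m)%N by lia.
have h1 : (m < m.+1)%N by lia.
case: t => [|[|[|[|[|t]]]]] // _; rewrite /wit /tyn /= ?ltnn ?h0 ?hm //.
all: rewrite ?eqxx //= -val_eqE /=.
  have -> : (m == m.+1) = false by lia.
  have -> : (m.+1 < m)%N = false by lia.
  by [].
have -> : (0 == m) = false by lia.
by [].
Qed.

Lemma orbits5 : num_pair_orbits e = 5%N.
Proof.
rewrite /num_pair_orbits.
rewrite (eq_imset _ (g := fun p => [set q | tyn q == tyn p])); last first.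
  by move=> p; apply/setP => q; rewrite !inE pair_relE eq_sym.
set h := fun t : 'I_5 => [set q | tyn q == t].
have -> : [set [set q | tyn q == tyn p] | p : 'I_(m+n) * 'I_(m+n)] = h @: setT.
  apply/setP => S; apply/imsetP/imsetP => [[p _ ->]|[t _ ->]].
    exists (inord (tyn p)) => //; rewrite /h; apply/setP => q; rewrite !inE inordK //.
    exact: tyn_lt.
  exists (wit t) => //; rewrite /h; apply/setP => q; rewrite !inE tyn_wit //.
rewrite card_imset ?cardsT ?card_ord //.
move=> t1 t2 /setP /(_ (wit t1)); rewrite !inE tyn_wit // eqxx => /esym /eqP ht.
by apply: val_inj.
Qed.
End O.

Local Open Scope ring_scope.

Section G.
Variable C : fieldType.
Lemma gen_inv N (A B : 'M[C]_N) k l1 l2 : A *m A = B -> A *m B = k *: A ->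
 (l1%:M + l2 *: A) *m ((l1 ^+ 2 - l2 ^+ 2 * k)%:M - (l1 * l2) *: A + l2 ^+ 2 *: B) = (l1 * (l1 ^+ 2 - l2 ^+ 2 * k))%:M.
Proof.
move=> hA hB.
rewrite mulmxDl !mulmxDr ?mulmxBr ?mulmxN ?mulNmx !mul_scalar_mx !mul_mx_scalar -!scalemxAl -!scalemxAr hA hB.
rewrite !scalerA.
apply/matrixP => i j; rewrite !mxE.
ring.
Qed.

Lemma inv_from N (M B : 'M[C]_N) : M *m B = 1%:M -> invmx M = B.
Proof.
move=> h; have [hM _] := mulmx1_unit h.
by rewrite -[invmx M]mulmx1 -h mulmxA mulVmx // mul1mx.
Qed.
End G.
Section S.
Variable C : numClosedFieldType.
Variables m n : nat.

Lemma sumb (G : bool -> C) : \sum_(k < m + n) G (k < m)%N = m%:R * G true + n%:R * G false.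
Proof.
rewrite big_split_ord /=.
rewrite (eq_bigr (fun _ => G true)); last by move=> i _; rewrite /= ltn_ord.
under [X in _ + X]eq_bigr do rewrite ltnNge leq_addr /=.
by rewrite !sumr_const !card_ord !mulr_natl.
Qed.

Lemma sumbE (G : bool -> C) (F : 'I_(m+n) -> C) : (forall k, F k = G (k < m)%N) ->
  \sum_k F k = m%:R * G true + n%:R * G false.
Proof. by move=> h; rewrite -sumb; apply: eq_bigr => k _; rewrite h. Qed.

Definition A := adjmx C (Kmn_rel m n).
Definition A2 : 'M[C]_(m+n) := \matrix_(i, j) (if (i < m)%N == (j < m)%N then (if (i < m)%N then n%:R else m%:R) else 0).

Lemma AE i j : A i j = if (i < m)%N != (j < m)%N then 1 else 0.
Proof. by rewrite mxE. Qed.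

Lemma AA : A *m A = A2.
Proof.
apply/matrixP => i j; rewrite !mxE.
rewrite /Kmn_rel.
rewrite (@sumbE (fun b => (if (i < m)%N != b then 1 else 0) * (if b != (j < m)%N then 1 else 0))); last by move=> k; rewrite !mxE.
by case: (i < m)%N; case: (j < m)%N; rewrite /= ?mulr1 ?mulr0 ?addr0 ?add0r.
Qed.

Lemma AA2 : A *m A2 = (m * n)%:R *: A.
Proof.
apply/matrixP => i j; rewrite !mxE.
rewrite /Kmn_rel.
rewrite (@sumbE (fun b => (if (i < m)%N != b then 1 else 0) * (if b == (j < m)%N then (if b then n%:R else m%:R) else 0))); last by move=> k; rewrite !mxE.
rewrite natrM.
case: (i < m)%N; case: (j < m)%N; rewrite /= ?mulr1 ?mulr0 ?addr0 ?add0r ?mul1r.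
all: by rewrite ?mul0r ?mulr0 // mulrC.
Qed.

Hypothesis hm : (1 < m)%N.
Hypothesis hmn : (m < n)%N.

Lemma lt_0 : (0 < m + n)%N. Proof. lia. Qed.
Lemma lt_1 : (1 < m + n)%N. Proof. lia. Qed.
Lemma lt_m : (m < m + n)%N. Proof. lia. Qed.
Lemma lt_m1 : (m.+1 < m + n)%N. Proof. lia. Qed.
Definition i0 := Ordinal lt_0.
Definition i1 := Ordinal lt_1.
Definition im := Ordinal lt_m.
Definition im1 := Ordinal lt_m1.

Lemma mn_neq0 : (m * n)%:R != 0 :> C.
Proof. by rewrite pnatr_eq0 muln_eq0 negb_or; apply/andP; split; apply/eqP; lia. Qed.

Lemma m_neq0 : m%:R != 0 :> C.
Proof. by rewrite pnatr_eq0; apply/eqP; lia. Qed.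

Lemma eig_pm (a : C) : a ^+ 2 = (m * n)%:R -> eigenvalue A a.
Proof.
move=> ha; apply/eigenvalueP.
exists (\row_k (if (k < m)%N then a else m%:R)).
  apply/matrixP => i j; rewrite !mxE /Kmn_rel.
  rewrite (@sumbE (fun b => (if b then a else m%:R) * (if b != (j < m)%N then 1 else 0))); last by move=> k; rewrite !mxE.
  case: (j < m)%N => /=; rewrite ?mulr1 ?mulr0 ?addr0 ?add0r.
    by rewrite -expr2 ha natrM mulrC.
  by rewrite mulrC.
apply/eqP => /matrixP /(_ 0 im); rewrite !mxE /= ltnn => /eqP; apply/negP; exact: m_neq0.
Qed.

Lemma eig_0 : eigenvalue A 0.
Proof.
apply/eigenvalueP.
exists (delta_mx 0 i0 - delta_mx 0 i1).
  rewrite scale0r mulmxBl -!rowE; apply/eqP; rewrite subr_eq0; apply/eqP.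
  by apply/matrixP => i j; rewrite !mxE /Kmn_rel /= (ltn_trans _ hm) ?hm.
apply/eqP => /matrixP /(_ 0 i0); rewrite !mxE /=.
by move/eqP; rewrite subr0 oner_eq0.
Qed.

Lemma eig_only (a : C) : eigenvalue A a -> a * (a ^+ 2 - (m * n)%:R) = 0.
Proof.
move/eigenvalueP => [v hv v0].
have h3 : v *m (A *m A2) = (a ^+ 3) *: v.
  have e1 : v *m A *m A = a ^+ 2 *: v by rewrite hv -scalemxAl hv scalerA -expr2.
  by rewrite -AA !mulmxA e1 -scalemxAl hv scalerA -exprSr.
rewrite AA2 -scalemxAr hv scalerA in h3.
move/eqP: h3; rewrite -subr_eq0 -scalerBl scaler_eq0 (negbTE v0) orbF => /eqP h.
transitivity (- ((m * n)%:R * a - a ^+ 3)); first ring.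
by rewrite h oppr0.
Qed.

Lemma eigs : num_eigenvalues_is A 3.
Proof.
set r := sqrtC ((m * n)%:R : C).
have hr : r ^+ 2 = (m * n)%:R by rewrite sqrtCK.
have r0 : r != 0 by rewrite sqrtC_eq0 mn_neq0.
exists [:: 0; r; - r]; split => //.
  have r1 : r != - r.
    by rewrite -addr_eq0 -mulr2n mulrn_eq0 (negbTE r0) orbF.
  have r2 : 0 != - r by rewrite eq_sym oppr_eq0.
  by rewrite /= !inE negb_or eq_sym r0 r1 r2.
move=> a; split.
  move/eig_only/eqP; rewrite mulf_eq0 subr_eq0 -hr eqf_sqr !inE.
  by case/orP => [->|/orP[]->]; rewrite ?orbT.
rewrite !inE => /orP [/eqP->|/orP [/eqP->|/eqP->]]; first exact: eig_0.
  exact: eig_pm.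
by apply: eig_pm; rewrite sqrrN.
Qed.

Local Notation LF := (linform C (m + n)).

Lemma lin_evalD (c1 c2 : LF) X : lin_eval (c1 + c2) X = lin_eval c1 X + lin_eval c2 X.
Proof. by rewrite /lin_eval -big_split; apply: eq_bigr => v _; rewrite !ffunE mulrDl. Qed.
Lemma lin_evalZ a (c1 : LF) X : lin_eval (a *: c1) X = a * lin_eval c1 X.
Proof. by rewrite /lin_eval mulr_sumr; apply: eq_bigr => v _; rewrite !ffunE mulrA. Qed.
Lemma lin_eval0 X : lin_eval (0 : LF) X = 0.
Proof. by rewrite /lin_eval big1 // => v _; rewrite !ffunE mul0r. Qed.
Lemma lin_evalN (c1 : LF) X : lin_eval (- c1) X = - lin_eval c1 X.
Proof. by rewrite -scaleN1r lin_evalZ mulN1r. Qed.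
Lemma lin_evalB (c1 c2 : LF) X : lin_eval (c1 - c2) X = lin_eval c1 X - lin_eval c2 X.
Proof. by rewrite lin_evalD lin_evalN. Qed.
Lemma lin_eval_sum I (r : seq I) (F : I -> LF) X :
  lin_eval (\sum_(i <- r) F i) X = \sum_(i <- r) lin_eval (F i) X.
Proof. exact: (big_morph (fun c => lin_eval c X) (fun a b => lin_evalD a b X) (lin_eval0 X)). Qed.

Lemma c_decomp (c : LF) : c = \sum_(v : var (m + n)) c v *: @xv C (m + n) (val v).1 (val v).2.
Proof.
apply/ffunP => w; rewrite sum_ffunE (bigD1 w) //= big1 ?addr0.
  rewrite !ffunE.
  case: w => [[p1 p2] hp] /=.
  rewrite (minn_idPl hp) (maxn_idPr hp) !eqxx /=.
  by rewrite [_ *: _]mulr1.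
move=> v hv; rewrite !ffunE.
case: ifP => [/andP [h1 h2]|_]; last by rewrite [_ *: _]mulr0.
case: v hv h1 h2 => [[p1 p2] hp] /= hv.
rewrite (minn_idPl hp) (maxn_idPr hp) => h1 h2.
exfalso; move/eqP: hv; apply; apply: val_inj => /=.
case: w h1 h2 => [[q1 q2] hq] /= h1 h2.
by congr pair; apply: val_inj; apply/eqP; rewrite eq_sym.
Qed.

Lemma lin_eval_xv (f : nat -> nat -> C) i j : (i < m + n)%N -> (j < m + n)%N ->
  (forall k l, f k l = f l k) -> lin_eval (@xv C (m + n) i j) (\matrix_(k, l) f k l) = f i j.
Proof.
move=> hi hj hf.
have hmin : (minn i j < m + n)%N by lia.
have hmax : (maxn i j < m + n)%N by lia.
have hle : ((Ordinal hmin, Ordinal hmax).1 <= (Ordinal hmin, Ordinal hmax).2)%N by rewrite /=; lia.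
pose v0 : var (m + n) := exist _ (Ordinal hmin, Ordinal hmax) hle.
rewrite /lin_eval (bigD1 v0) //= big1 ?addr0.
  rewrite !ffunE !mxE /= !eqxx mul1r.
  by case: (leqP i j) => _ //; rewrite hf.
move=> v hv; rewrite !ffunE.
case: ifP => [/andP [h1 h2]|_]; last by rewrite mul0r.
exfalso; move/eqP: hv; apply; apply: val_inj => /=.
case: v h1 h2 => [[p1 p2] hp] /= h1 h2.
by congr pair; apply: val_inj; apply/eqP.
Qed.

Definition ent (a b c : C) (k l : nat) : C :=
  (if k == l then a else 0) + (if (k < m)%N != (l < m)%N then b else 0)
  + (if (k < m)%N == (l < m)%N then c * (if (k < m)%N then n%:R else m%:R) else 0).

Lemma ent_sym a b c k l : ent a b c k l = ent a b c l k.
Proof.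
rewrite /ent [l == k]eq_sym !(eq_sym (l < m)%N).
by case: (k < m)%N; case: (l < m)%N.
Qed.

Lemma Xabc_ent a b c : a%:M + b *: A + c *: A2 = \matrix_(k, l) ent a b c k l.
Proof.
apply/matrixP => i j; rewrite !mxE /ent /Kmn_rel.
case: (i =P j) => [->|/eqP ne]; rewrite ?eqxx.
  by case: (j < m)%N; rewrite /= ?mulr1n ?mulr0 ?addr0 ?add0r.
have ne' : ((i : nat) == j) = false by apply/negbTE.
rewrite ne' mulr0n add0r.
by case: (i < m)%N; case: (j < m)%N; rewrite /= ?mulr1 ?mulr0 ?addr0 ?add0r.
Qed.

Definition kk : C := (m * n)%:R.
Definition Ymx (l1 l2 : C) : 'M[C]_(m + n) :=
  (l1 ^+ 2 - l2 ^+ 2 * kk)%:M - (l1 * l2) *: A + l2 ^+ 2 *: A2.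
Definition kap (l1 l2 : C) : C := l1 * (l1 ^+ 2 - l2 ^+ 2 * kk).

Lemma MY l1 l2 : (l1%:M + l2 *: A) *m Ymx l1 l2 = (kap l1 l2)%:M.
Proof. exact: gen_inv AA AA2. Qed.

Lemma inv_pt l1 l2 : kap l1 l2 != 0 ->
  ((l1%:M + l2 *: A) *m ((kap l1 l2)^-1 *: Ymx l1 l2) = 1%:M) /\
  ((kap l1 l2)^-1 *: Ymx l1 l2 = \matrix_(i, j) ent ((l1 ^+ 2 - l2 ^+ 2 * kk) / kap l1 l2)
       (- (l1 * l2) / kap l1 l2) (l2 ^+ 2 / kap l1 l2) i j).
Proof.
move=> hk; split.
  by rewrite -scalemxAr MY scale_scalar_mx mulVf.
rewrite -Xabc_ent /Ymx.
apply/matrixP => i j; rewrite !mxE.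
by field.
Qed.

Lemma inv_shape l1 l2 : l1%:M + l2 *: A \in unitmx ->
  exists a b c, invmx (l1%:M + l2 *: A) = \matrix_(i, j) ent a b c i j.
Proof.
move=> hu.
case: (kap l1 l2 =P 0) => hk; last first.
  have hk' : kap l1 l2 != 0 by apply/eqP.
  have [h1 h2] := inv_pt hk'.
  by exists ((l1 ^+ 2 - l2 ^+ 2 * kk) / kap l1 l2), (- (l1 * l2) / kap l1 l2), (l2 ^+ 2 / kap l1 l2); rewrite (inv_from h1).
exfalso.
have hY : Ymx l1 l2 = 0.
  by rewrite -[Ymx l1 l2]mul1mx -(mulVmx hu) -mulmxA MY hk raddf0 mulmx0.
have h0 : (0 < m)%N by lia.
have := congr1 (fun M : 'M[C]_(m + n) => M i0 i1) hY.
rewrite /Ymx !mxE /Kmn_rel /= h0 hm /= mulr0n mulr0 subr0 add0r => /eqP.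
rewrite mulf_eq0 pnatr_eq0 expf_eq0 /=.
have -> : (n == 0)%N = false by lia.
rewrite orbF => /eqP hl2.
have := congr1 (fun M : 'M[C]_(m + n) => M i0 i0) hY.
rewrite /Ymx !mxE /Kmn_rel /= h0 hl2 /= expr0n /= !(mul0r, mulr0, subr0, addr0, mulr1n).
move/eqP; rewrite expf_eq0 /= => /eqP hl1.
have hz : l1%:M + l2 *: A = 0.
  by rewrite hl1 hl2 scale0r addr0; apply/matrixP => i j; rewrite !mxE mul0rn.
move: (mulmxV hu); rewrite hz mul0mx => /(congr1 (fun M : 'M[C]_(m + n) => M i0 i0)).
by rewrite !mxE /= => /eqP; rewrite eq_sym oner_eq0.
Qed.

Local Notation x := (@xv C (m + n)).
Local Notation Xe a b c := (\matrix_(i, j) ent a b c i j).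

Lemma evx a b c i j : (i < m + n)%N -> (j < m + n)%N -> lin_eval (x i j) (Xe a b c) = ent a b c i j.
Proof. by move=> hi hj; rewrite lin_eval_xv // => k l; exact: ent_sym. Qed.

Lemma ent_d1 a b c i : (i < m)%N -> ent a b c i i = a + c * n%:R.
Proof. by move=> hi; rewrite /ent !eqxx hi /= addr0. Qed.
Lemma ent_d2 a b c i : (m <= i)%N -> ent a b c i i = a + c * m%:R.
Proof. by move=> hi; rewrite /ent !eqxx ltnNge hi /= addr0. Qed.
Lemma ent_e1 a b c i j : (i < m)%N -> (j < m)%N -> i != j -> ent a b c i j = c * n%:R.
Proof. by move=> hi hj hij; rewrite /ent (negbTE hij) hi hj /= !add0r. Qed.
Lemma ent_e2 a b c i j : (m <= i)%N -> (m <= j)%N -> i != j -> ent a b c i j = c * m%:R.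
Proof. by move=> hi hj hij; rewrite /ent (negbTE hij) !ltnNge hi hj /= !add0r. Qed.
Lemma ent_f a b c i j : (i < m)%N -> (m <= j)%N -> ent a b c i j = b.
Proof.
move=> hi hj; have hij : (i == j) = false by lia.
by rewrite /ent hij hi ltnNge hj /= !add0r addr0.
Qed.

Lemma forms_vanish a b c f : f \in Kmn_forms C m n -> lin_eval f (Xe a b c) = 0.
Proof.
have h0 : (0 < m)%N by lia.
rewrite /Kmn_forms !mem_cat.
case/orP => [/mapP [i hi ->]|].
  move: hi; rewrite mem_iota add0n => /andP [_ hi].
  rewrite lin_evalB !evx; try lia.
  by rewrite ent_d1 // ent_d1 // subrr.
case/orP => [/mapP [i hi ->]|].
  move: hi; rewrite mem_iota => /andP [hi1 hi2].
  rewrite lin_evalB !evx; try lia.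
  by rewrite ent_d2 // ent_d2 // subrr.
case/orP => [/mapP [[i j]] |].
  rewrite mem_filter => /andP [/= hp /allpairsP [[i' j'] [/= hi hj [ei ej]]]] ->; subst i' j'.
  move: hi hj hp; rewrite !mem_iota /= => hi hj hp.
  rewrite lin_evalB !evx; try lia.
  rewrite ent_e1; try lia. rewrite ent_e1; try lia. by rewrite subrr.
case/orP => [/mapP [[i j]] |].
  rewrite mem_filter => /andP [/= hp /allpairsP [[i' j'] [/= hi hj [ei ej]]]] ->; subst i' j'.
  move: hi hj hp; rewrite !mem_iota /= => hi hj hp.
  rewrite lin_evalB !evx; try lia.
  rewrite ent_e2; try lia. rewrite ent_e2; try lia. by rewrite subrr.
case/orP => [/allpairsP [[i j] [/= hi hj ->]] |].
  move: hi hj; rewrite !mem_iota /= => hi hj.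
  rewrite lin_evalB !evx; try lia.
  rewrite ent_f; try lia. rewrite ent_f; try lia. by rewrite subrr.
rewrite !inE => /orP [] /eqP ->.
  rewrite lin_evalB !lin_evalZ !evx; try lia.
  rewrite ent_e1; try lia. rewrite ent_e2; try lia.
  ring.
rewrite !lin_evalB !lin_evalZ !evx; try lia.
rewrite ent_d1; try lia. rewrite ent_e2; try lia. rewrite ent_d2; try lia.
rewrite natrB; last lia.
ring.
Qed.

Lemma span_ideal c : c \in <<Kmn_forms C m n>>%VS -> linform_in_ideal A c.
Proof.
move=> hc X [M [[l1 [l2 ->]] hu ->]].
have [a [b [c' ->]]] := inv_shape hu.
have := @coord_span _ _ _ (in_tuple (Kmn_forms C m n)) c hc.
move=> ->; rewrite lin_eval_sum big1 // => i _.
rewrite lin_evalZ forms_vanish ?mulr0 //.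
by apply: mem_nth; exact: ltn_ord.
Qed.

Local Notation KF := (Kmn_forms C m n).

Lemma mem1 i : (i < m)%N -> x 0 0 - x i i \in KF.
Proof. by move=> hi; rewrite /Kmn_forms mem_cat; apply/orP; left; apply/mapP; exists i; rewrite // mem_iota. Qed.
Lemma mem2 i : (m <= i)%N -> (i < m + n)%N -> x m m - x i i \in KF.
Proof.
move=> h1 h2; rewrite /Kmn_forms !mem_cat; apply/orP; right; apply/orP; left.
by apply/mapP; exists i; rewrite // mem_iota h1.
Qed.
Lemma mem3 i j : (i < j)%N -> (j < m)%N -> x 0 1 - x i j \in KF.
Proof.
move=> h1 h2; rewrite /Kmn_forms !mem_cat; do 2 (apply/orP; right); apply/orP; left.
apply/mapP; exists (i, j) => //; rewrite mem_filter h1 /=.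
by apply/allpairsP; exists (i, j); rewrite !mem_iota /=; split => //; lia.
Qed.
Lemma mem4 i j : (m <= i)%N -> (i < j)%N -> (j < m + n)%N -> x m m.+1 - x i j \in KF.
Proof.
move=> h0 h1 h2; rewrite /Kmn_forms !mem_cat; do 3 (apply/orP; right); apply/orP; left.
apply/mapP; exists (i, j) => //; rewrite mem_filter h1 /=.
by apply/allpairsP; exists (i, j); rewrite !mem_iota /=; split => //; lia.
Qed.
Lemma mem5 i j : (i < m)%N -> (m <= j)%N -> (j < m + n)%N -> x 0 m - x i j \in KF.
Proof.
move=> h0 h1 h2; rewrite /Kmn_forms !mem_cat; do 4 (apply/orP; right); apply/orP; left.
by apply/allpairsP; exists (i, j); rewrite !mem_iota /=; split => //; lia.
Qed.
Lemma mem6 : m%:R *: x 0 1 - n%:R *: x (m + n - 2) (m + n - 1) \in KF.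
Proof. by rewrite /Kmn_forms !mem_cat; do 5 (apply/orP; right); rewrite inE eqxx. Qed.
Lemma mem7 : m%:R *: x 0 0 - (n - m)%:R *: x (m + n - 2) (m + n - 1) - m%:R *: x (m + n - 1) (m + n - 1) \in KF.
Proof. by rewrite /Kmn_forms !mem_cat; do 5 (apply/orP; right); rewrite !inE eqxx orbT. Qed.

Definition tv (i j : nat) : nat :=
  if i == j then (if (i < m)%N then 0 else 1)
  else if (i < m)%N == (j < m)%N then (if (i < m)%N then 2 else 3) else 4.
Definition d (k i j : nat) : C := if tv i j == k then 1 else 0.

Lemma ent_ty a b c i j : (i <= j)%N -> ent a b c i j =
  d 0 i j * (a + c * n%:R) + d 1 i j * (a + c * m%:R) + d 2 i j * (c * n%:R)
  + d 3 i j * (c * m%:R) + d 4 i j * b.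
Proof.
move=> hij; rewrite /d /tv /ent.
case: (i =P j) => [->|/eqP ne].
  by rewrite !eqxx /=; case: (j < m)%N; rewrite /= !(mul0r, mul1r, addr0, add0r).

by case hi: (i < m)%N; case hj: (j < m)%N; rewrite /= !(mul0r, mul1r, addr0, add0r) //; lia.
Qed.

Definition Rv (i j : nat) : LF := d 0 i j *: x 0 0 + d 1 i j *: x m m + d 2 i j *: x 0 1
  + d 3 i j *: x m m.+1 + d 4 i j *: x 0 m.

Lemma resid i j : (i <= j)%N -> (j < m + n)%N -> x i j - Rv i j \in <<KF>>%VS.
Proof.
move=> hij hj; rewrite /Rv /d /tv.
case: (i =P j) => [<-|/eqP ne].
  case hi: (i < m)%N => /=; rewrite !(scale1r, scale0r, addr0, add0r) -opprB rpredN memv_span //.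
    exact: mem1.
  apply: mem2 => //; lia.
case hi: (i < m)%N; case hj': (j < m)%N => /=; rewrite !(scale1r, scale0r, addr0, add0r) -opprB rpredN memv_span //.
- apply: mem3; lia.
- apply: mem5; lia.
- lia.
- apply: mem4; lia.
Qed.

Lemma lin_id (X00 Xmm X01 Xmm1 X0m XL XLL : LF) (S0 S1 S2 S3 S4 : C) :
  S0 *: X00 + S1 *: Xmm + S2 *: X01 + S3 *: Xmm1 + S4 *: X0m =
  (S0 / m%:R) *: (m%:R *: X00 - (n - m)%:R *: XL - m%:R *: XLL)
  + (S2 / m%:R) *: (m%:R *: X01 - n%:R *: XL)
  - S0 *: (Xmm - XLL) + S3 *: (Xmm1 - XL) + S4 *: X0m + (S0 + S1) *: Xmm
  + ((n%:R * S0 + m%:R * S1 + n%:R * S2 + m%:R * S3 - m%:R * (S0 + S1)) / m%:R) *: XL.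
Proof.
have hm0 := m_neq0.
apply/ffunP => w; rewrite !ffunE natrB; last lia.
rewrite /GRing.scale /=.
by field.
Qed.

Lemma T_in (S : nat -> C) : S 0 + S 1 = 0 -> S 4 = 0 ->
  n%:R * S 0 + m%:R * S 1 + n%:R * S 2 + m%:R * S 3 = 0 ->
  S 0 *: x 0 0 + S 1 *: x m m + S 2 *: x 0 1 + S 3 *: x m m.+1 + S 4 *: x 0 m \in <<KF>>%VS.
Proof.
move=> e1 e4 eK.
rewrite (lin_id _ _ _ _ _ (x (m + n - 2) (m + n - 1)) (x (m + n - 1) (m + n - 1))) eK e1 e4 mulr0 subr0 mul0r !scale0r !addr0.
have hL : (m <= m + n - 2)%N by lia.
apply: rpredD; last by apply: rpredZ; apply: memv_span; apply: mem4; lia.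
apply: rpredB; last by apply: rpredZ; apply: memv_span; apply: mem2; lia.
by apply: rpredD; apply: rpredZ; apply: memv_span; [exact: mem7 | exact: mem6].
Qed.

Definition Phi (S : nat -> C) a b c :=
  S 0 * (a + c * n%:R) + S 1 * (a + c * m%:R) + S 2 * (c * n%:R)
  + S 3 * (c * m%:R) + S 4 * b.

Lemma kk_neq1 : kk != 1.
Proof. by rewrite /kk pnatr_eq1 muln_eq1; apply/negP => /andP [/eqP h _]; lia. Qed.

Lemma two_neq0 : (2%:R : C) != 0.
Proof. by rewrite pnatr_eq0. Qed.

Lemma alg (S : nat -> C) : Phi S 1 0 0 = 0 -> Phi S 1 (- (1 / (1 - kk))) (1 / (1 - kk)) = 0 ->
  Phi S 1 (1 / (1 - kk)) (1 / (1 - kk)) = 0 ->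
  [/\ S 0 + S 1 = 0, S 4 = 0 & n%:R * S 0 + m%:R * S 1 + n%:R * S 2 + m%:R * S 3 = 0].
Proof.
move=> E1 E2 E3.
have hk : 1 - kk != 0 by rewrite subr_eq0 eq_sym kk_neq1.
have h2 := two_neq0.
have e1 : S 0 + S 1 = 0 by rewrite -E1 /Phi; ring.
set K := n%:R * S 0 + m%:R * S 1 + n%:R * S 2 + m%:R * S 3.
have e2 : K - S 4 = 0.
  rewrite (_ : K - S 4 = (1 - kk) * Phi S 1 (- (1 / (1 - kk))) (1 / (1 - kk)) - (1 - kk) * (S 0 + S 1)).
    by rewrite E2 e1 !mulr0 subrr.
  by rewrite /Phi /K; field; rewrite -natrM.
have e3 : K + S 4 = 0.
  rewrite (_ : K + S 4 = (1 - kk) * Phi S 1 (1 / (1 - kk)) (1 / (1 - kk)) - (1 - kk) * (S 0 + S 1)).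
    by rewrite E3 e1 !mulr0 subrr.
  by rewrite /Phi /K; field; rewrite -natrM.
split => //.
  rewrite (_ : S 4 = ((K + S 4) - (K - S 4)) / 2%:R); first by rewrite e2 e3 subrr mul0r.
  by field.
rewrite (_ : K = ((K + S 4) + (K - S 4)) / 2%:R); first by rewrite e2 e3 addr0 mul0r.
by field.
Qed.

Lemma ptR l1 l2 : kap l1 l2 != 0 -> recip_pt A (Xe ((l1 ^+ 2 - l2 ^+ 2 * kk) / kap l1 l2)
       (- (l1 * l2) / kap l1 l2) (l2 ^+ 2 / kap l1 l2)).
Proof.
move=> hk; have [h1 h2] := inv_pt hk.
exists (l1%:M + l2 *: A); split.
- by exists l1, l2.
- exact: (mulmx1_unit h1).1.
- by rewrite (inv_from h1) h2.
Qed.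

Section Cfix.
Variable c : LF.
Local Notation v1 v := ((val v).1 : nat).
Local Notation v2 v := ((val v).2 : nat).
Definition Sk k := \sum_(v : var (m + n)) c v * d k (v1 v) (v2 v).

Lemma eval_S a b c' : lin_eval c (Xe a b c') =
  Sk 0 * (a + c' * n%:R) + Sk 1 * (a + c' * m%:R) + Sk 2 * (c' * n%:R)
  + Sk 3 * (c' * m%:R) + Sk 4 * b.
Proof.
rewrite /lin_eval /Sk !mulr_suml -!big_split /=.
apply: eq_bigr => v _; rewrite mxE ent_ty; last exact: (svalP v).
by rewrite !mulrDr !mulrA.
Qed.

Definition T := Sk 0 *: x 0 0 + Sk 1 *: x m m + Sk 2 *: x 0 1 + Sk 3 *: x m m.+1 + Sk 4 *: x 0 m.

Lemma cT : c - T \in <<KF>>%VS.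
Proof.
have -> : c - T = \sum_(v : var (m + n)) c v *: (x (v1 v) (v2 v) - Rv (v1 v) (v2 v)).
  rewrite {1}(c_decomp c).
  under [RHS]eq_bigr do rewrite scalerBr.
  rewrite sumrB; congr (_ - _).
  rewrite /T /Sk; under [RHS]eq_bigr do rewrite /Rv !scalerDr !scalerA.
  by rewrite !big_split /= !scaler_suml.
apply: rpred_sum => v _; apply: rpredZ; apply: resid; first exact: (svalP v).
exact: ltn_ord.
Qed.
Lemma ideal_span : linform_in_ideal A c -> c \in <<KF>>%VS.
Proof.
move=> hI.
have hk : 1 - kk != 0 by rewrite subr_eq0 eq_sym kk_neq1.
have k10 : kap 1 0 != 0 by rewrite /kap expr1n expr0n /= mul0r subr0 mul1r oner_neq0.
have k11 : kap 1 1 != 0 by rewrite /kap !expr1n !mul1r.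
have k12 : kap 1 (-1) != 0 by rewrite /kap sqrrN !expr1n !mul1r.
have E1 : Phi Sk 1 0 0 = 0.
  rewrite -[RHS](hI _ (ptR k10)) eval_S /Phi /kap; field.
  by [].
have E2 : Phi Sk 1 (- (1 / (1 - kk))) (1 / (1 - kk)) = 0.
  rewrite -[RHS](hI _ (ptR k11)) eval_S /Phi /kap; field.
  by rewrite -natrM.
have E3 : Phi Sk 1 (1 / (1 - kk)) (1 / (1 - kk)) = 0.
  rewrite -[RHS](hI _ (ptR k12)) eval_S /Phi /kap; field.
  by rewrite -natrM.
have [e1 e4 eK] := alg E1 E2 E3.
rewrite -[c](subrK T); apply: rpredD; first exact: cT.
exact: T_in.
Qed.
End Cfix.

Lemma linpart (c : LF) : linform_in_ideal A c <-> c \in <<KF>>%VS.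
Proof. by split; [exact: ideal_span | exact: span_ideal]. Qed.
End S.

Theorem mainTheorem6 (C : numClosedFieldType) (m n : nat) :
  (1 < m)%N -> (m < n)%N ->
  [/\ num_eigenvalues_is (adjmx C (Kmn_rel m n)) 3,
      num_pair_orbits (Kmn_rel m n) = 5%N &
      forall c : linform C (m + n),
        linform_in_ideal (adjmx C (Kmn_rel m n)) c <-> c \in <<Kmn_forms C m n>>%VS].
Proof.
move=> hm hmn; split.
- exact: (eigs C hm hmn).
- exact: (orbits5 hm hmn).
- move=> c; exact: (linpart hm hmn).
Qed.
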